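(* Let $\mathrm{M}$ be the 2-space group $632$ (IT number 16, $p6$), so that $E^2/\mathrm{M}$ is a turnover with three cone points obtained by gluing two congruent $30^\circ$–$60^\circ$ right triangles along their boundaries. Let c-ref. denote the central reflection of $E^2/\mathrm{M}$ interchanging the two triangles. Then $\mathrm{Sym}(\mathrm{M})=\mathrm{Aff}(\mathrm{M})=\{\mathrm{idt.},\ \text{c-ref.}\}$, and $\Omega:\mathrm{Aff}(\mathrm{M})\to\mathrm{Out}(\mathrm{M})$ is an isomorphism.
   Context: A 2-space group is a discrete group of isometries of $E^2$ with compact quotient. Affine maps of $E^2$ are written $a+A$ ($x\mapsto a+Ax$). For a 2-space group $\mathrm{M}$, let $N_A(\mathrm{M})$ be its normalizer in the affine group of $E^2$; each $a+A\in N_A(\mathrm{M})$ induces an affinity $(a+A)_\star:\mathrm{M}x\mapsto\mathrm{M}(a+Ax)$ of the flat orbifold $E^2/\mathrm{M}$. $\mathrm{Aff}(\mathrm{M})$ is the group of all such affinities and $\mathrm{Sym}(\mathrm{M})=\mathrm{Isom}(E^2/\mathrm{M})$ its subgroup of isometries; idt. is the identity. $\Omega:\mathrm{Aff}(\mathrm{M})\to\mathrm{Out}(\mathrm{M})$ sends $(a+A)_\star$ to the outer automorphism class of $g\mapsto(a+A)g(a+A)^{-1}$ on $\mathrm{M}$. *)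

(* Defs.v *)
From Stdlib Require Import Reals ZArith.
From Coquelicot Require Import Coquelicot.
Open Scope R_scope.

(** Affine maps x |-> a + A x of E^2, a = (b1,b2), A = [[m11,m12],[m21,m22]]. *)
Record affmap := AffMap { b1 : R; b2 : R; m11 : R; m12 : R; m21 : R; m22 : R }.

Definition pt := (R * R)%type.

Definition aff_app (f : affmap) (x : pt) : pt :=
  (b1 f + m11 f * fst x + m12 f * snd x, b2 f + m21 f * fst x + m22 f * snd x).

Definition aff_comp (f g : affmap) : affmap :=
  AffMap (b1 f + m11 f * b1 g + m12 f * b2 g)
         (b2 f + m21 f * b1 g + m22 f * b2 g)
         (m11 f * m11 g + m12 f * m21 g) (m11 f * m12 g + m12 f * m22 g)
         (m21 f * m11 g + m22 f * m21 g) (m21 f * m12 g + m22 f * m22 g).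

Definition aff_det (f : affmap) : R := m11 f * m22 f - m12 f * m21 f.

Definition is_affine (f : affmap) : Prop := aff_det f <> 0.

(** inverse (meaningful when det <> 0) *)
Definition aff_inv (f : affmap) : affmap :=
  let d := aff_det f in
  let i11 := m22 f / d in let i12 := - m12 f / d in
  let i21 := - m21 f / d in let i22 := m11 f / d in
  AffMap (- (i11 * b1 f + i12 * b2 f)) (- (i21 * b1 f + i22 * b2 f)) i11 i12 i21 i22.

Definition aff_id : affmap := AffMap 0 0 1 0 0 1.

Definition transl (v : pt) : affmap := AffMap (fst v) (snd v) 1 0 0 1.

Definition rot60 : affmap := AffMap 0 0 (1/2) (- (sqrt 3 / 2)) (sqrt 3 / 2) (1/2).

(** The 2-space group M = 632 (p6): hexagonal lattice Z e1 + Z e2 with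
    e1 = (1,0), e2 = (1/2, sqrt 3 / 2), together with the rotations by
    multiples of 60 degrees about the origin. *)
Definition inM (g : affmap) : Prop :=
  exists (m n : Z) (k : nat),
    g = aff_comp (transl (IZR m + IZR n / 2, IZR n * (sqrt 3 / 2)))
                 (Nat.iter k (aff_comp rot60) aff_id).

Definition inNA (f : affmap) : Prop :=
  is_affine f /\
  (forall g, inM g -> inM (aff_comp f (aff_comp g (aff_inv f)))) /\
  (forall g, inM g -> inM (aff_comp (aff_inv f) (aff_comp g f))).

(** points of the orbifold E^2/M are orbits M x *)
Definition same_orbit (x y : pt) : Prop := exists g, inM g /\ aff_app g x = y.

(** equality of the induced affinities f_* and g_* of E^2/M *)
Definition induced_eq (f g : affmap) : Prop :=
  forall x, same_orbit (aff_app f x) (aff_app g x).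

(** the reflection in the x-axis; its induced affinity is c-ref. *)
Definition refl_x : affmap := AffMap 0 0 1 0 0 (-1).

(** Euclidean distance and the orbit-space metric on E^2/M *)
Definition edist (x y : pt) : R :=
  sqrt ((fst x - fst y) ^ 2 + (snd x - snd y) ^ 2).

Definition qdist (x y : pt) : Rbar :=
  Glb_Rbar (fun r => exists g, inM g /\ r = edist x (aff_app g y)).

Definition induced_isometry (f : affmap) : Prop :=
  forall x y, qdist (aff_app f x) (aff_app f y) = qdist x y.

Definition is_autM (alpha : affmap -> affmap) : Prop :=
  (forall g, inM g -> inM (alpha g)) /\
  (forall g h, inM g -> inM h -> alpha (aff_comp g h) = aff_comp (alpha g) (alpha h)) /\
  (forall g h, inM g -> inM h -> alpha g = alpha h -> g = h) /\
  (forall h, inM h -> exists g, inM g /\ alpha g = h).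

(** equality in Out(M): alpha and beta differ by an inner automorphism *)
Definition out_eq (alpha beta : affmap -> affmap) : Prop :=
  exists h, inM h /\
    forall g, inM g -> alpha g = aff_comp h (aff_comp (beta g) (aff_inv h)).

(** g |-> f g f^-1 ; Omega(f_* ) is its class in Out(M) *)
Definition conj_by (f : affmap) : affmap -> affmap :=
  fun g => aff_comp f (aff_comp g (aff_inv f)).

(* Main.v *)
Require Import Defs.
From Stdlib Require Import Reals ZArith.
From Coquelicot Require Import Coquelicot.
From Stdlib Require Import Nsatz Lia Lra.
Open Scope R_scope.
Set Bullet Behavior "Strict Subproofs".

Lemma s3sq : sqrt 3 * sqrt 3 = 3.
Proof. apply sqrt_sqrt; lra. Qed.
Lemma s3pos : 0 < sqrt 3.
Proof. apply sqrt_lt_R0; lra. Qed.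
Lemma s3b : 1.7 < sqrt 3 < 1.8.
Proof. pose proof s3sq; pose proof s3pos; split; nra. Qed.

Ltac affeq := match goal with |- AffMap _ _ _ _ _ _ = AffMap _ _ _ _ _ _ => f_equal end.

Lemma comp_assoc f g h : aff_comp f (aff_comp g h) = aff_comp (aff_comp f g) h.
Proof. destruct f, g, h; unfold aff_comp; simpl; f_equal; ring. Qed.
Lemma comp_id_l f : aff_comp aff_id f = f.
Proof. destruct f; unfold aff_comp; simpl; f_equal; ring. Qed.
Lemma comp_id_r f : aff_comp f aff_id = f.
Proof. destruct f; unfold aff_comp; simpl; f_equal; ring. Qed.
Lemma det_comp f g : aff_det (aff_comp f g) = aff_det f * aff_det g.
Proof. destruct f, g; unfold aff_det, aff_comp; simpl; ring. Qed.
Lemma inv_r f : aff_det f <> 0 -> aff_comp f (aff_inv f) = aff_id.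
Proof. destruct f; unfold aff_comp, aff_inv, aff_id; simpl; unfold aff_det in *; simpl in *; intro; f_equal; field; auto. Qed.
Lemma inv_l f : aff_det f <> 0 -> aff_comp (aff_inv f) f = aff_id.
Proof. destruct f; unfold aff_comp, aff_inv, aff_id; simpl; unfold aff_det in *; simpl in *; intro; f_equal; field; auto. Qed.
Lemma inv_comp f g : aff_det f <> 0 -> aff_det g <> 0 ->
  aff_inv (aff_comp f g) = aff_comp (aff_inv g) (aff_inv f).
Proof. intros H1 H2. assert (H3: aff_det (aff_comp f g) <> 0) by (rewrite det_comp; apply Rmult_integral_contrapositive; auto).
  revert H1 H2 H3. destruct f, g; unfold aff_comp, aff_inv; simpl; unfold aff_det in *; simpl in *; intros; f_equal; field; auto. Qed.
Lemma det_inv f : aff_det f <> 0 -> aff_det (aff_inv f) <> 0.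
Proof. intro H. intro H'. assert (aff_det (aff_comp f (aff_inv f)) = 0) by (rewrite det_comp, H'; ring).
  rewrite inv_r in H0 by auto. unfold aff_det, aff_id in H0; simpl in H0. lra. Qed.
Lemma app_comp f g x : aff_app (aff_comp f g) x = aff_app f (aff_app g x).
Proof. destruct f, g, x; unfold aff_app, aff_comp; simpl; f_equal; ring. Qed.
Lemma app_id x : aff_app aff_id x = x.
Proof. destruct x; unfold aff_app, aff_id; simpl; f_equal; ring. Qed.
Lemma app_inv_l f x : aff_det f <> 0 -> aff_app (aff_inv f) (aff_app f x) = x.
Proof. intro; rewrite <- app_comp, inv_l, app_id; auto. Qed.
Lemma app_inv_r f x : aff_det f <> 0 -> aff_app f (aff_app (aff_inv f) x) = x.
Proof. intro; rewrite <- app_comp, inv_r, app_id; auto. Qed.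
Lemma inv_id : aff_inv aff_id = aff_id.
Proof. unfold aff_inv, aff_id; simpl; unfold aff_det; simpl; f_equal; field. Qed.
Lemma inv_refl : aff_inv refl_x = refl_x.
Proof. unfold aff_inv, refl_x; simpl; unfold aff_det; simpl; f_equal; field. Qed.
Lemma refl_refl : aff_comp refl_x refl_x = aff_id.
Proof. unfold aff_comp, refl_x, aff_id; simpl; f_equal; ring. Qed.
Lemma det_refl : aff_det refl_x <> 0.
Proof. unfold aff_det, refl_x; simpl; lra. Qed.
Lemma det_id : aff_det aff_id <> 0.
Proof. unfold aff_det, aff_id; simpl; lra. Qed.
Lemma conj_eq f g h : aff_det f <> 0 -> aff_comp f (aff_comp g (aff_inv f)) = h ->
  aff_comp f g = aff_comp h f.
Proof. intros Hd H; subst h. rewrite <- !comp_assoc, inv_l, comp_id_r; auto. Qed.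
Lemma inv_unique f g : aff_det f <> 0 -> aff_comp f g = aff_id -> g = aff_inv f.
Proof. intros Hd H. rewrite <- (comp_id_l g), <- (inv_l f), <- comp_assoc, H, comp_id_r; auto. Qed.

Definition rc' (j : nat) : R := match j with 0 => 1 | 1 => 1/2 | 2 => -1/2 | 3 => -1 | 4 => -1/2 | _ => 1/2 end.
Definition rs' (j : nat) : R := match j with 0 => 0 | 1 => sqrt 3/2 | 2 => sqrt 3/2 | 3 => 0 | 4 => -(sqrt 3/2) | _ => -(sqrt 3/2) end.
Definition rc j := rc' (j mod 6).
Definition rs j := rs' (j mod 6).

Lemma rcs_cases j :
  (rc j = 1 /\ rs j = 0 /\ (j mod 6 = 0)%nat) \/
  (rc j = 1/2 /\ rs j = sqrt 3/2 /\ (j mod 6 = 1)%nat) \/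
  (rc j = -1/2 /\ rs j = sqrt 3/2 /\ (j mod 6 = 2)%nat) \/
  (rc j = -1 /\ rs j = 0 /\ (j mod 6 = 3)%nat) \/
  (rc j = -1/2 /\ rs j = -(sqrt 3/2) /\ (j mod 6 = 4)%nat) \/
  (rc j = 1/2 /\ rs j = -(sqrt 3/2) /\ (j mod 6 = 5)%nat).
Proof.
  unfold rc, rs. assert (H := Nat.mod_upper_bound j 6 ltac:(lia)).
  destruct (j mod 6) as [|[|[|[|[|[|k]]]]]]; simpl; try lia; tauto.
Qed.

Ltac rcase j := let E1 := fresh "E" in let E2 := fresh "E" in let E3 := fresh "E" in
  destruct (rcs_cases j) as [[E1 [E2 E3]]|[[E1 [E2 E3]]|[[E1 [E2 E3]]|[[E1 [E2 E3]]|[[E1 [E2 E3]]|[E1 [E2 E3]]]]]]];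
  rewrite ?E1, ?E2 in *.

Lemma rc_mod j k : (j mod 6 = k mod 6)%nat -> rc j = rc k /\ rs j = rs k.
Proof. unfold rc, rs; intro H; rewrite H; auto. Qed.

Lemma rc_of j k : (j mod 6 = k mod 6)%nat -> rc j = rc' (k mod 6) /\ rs j = rs' (k mod 6).
Proof. unfold rc, rs; intro H; rewrite H; auto. Qed.

Lemma rc_add i j : rc (i + j) = rc i * rc j - rs i * rs j /\ rs (i + j) = rs i * rc j + rc i * rs j.
Proof.
  pose proof s3sq.
  assert (Hm : ((i + j) mod 6 = ((i mod 6) + (j mod 6)) mod 6)%nat) by (apply Nat.Div0.add_mod).
  destruct (rcs_cases i) as [[E1 [E2 E3]]|[[E1 [E2 E3]]|[[E1 [E2 E3]]|[[E1 [E2 E3]]|[[E1 [E2 E3]]|[E1 [E2 E3]]]]]]];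
  destruct (rcs_cases j) as [[F1 [F2 F3]]|[[F1 [F2 F3]]|[[F1 [F2 F3]]|[[F1 [F2 F3]]|[[F1 [F2 F3]]|[F1 [F2 F3]]]]]]];
  rewrite E3, F3 in Hm; destruct (rc_of _ _ Hm) as [G1 G2]; rewrite G1, G2; simpl;
  rewrite E1, E2, F1, F2; clear -H; split; nra.
Qed.

Lemma rc_neg i : rc (5 * i) = rc i /\ rs (5 * i) = - rs i.
Proof.
  assert (Hm : ((5 * i) mod 6 = (5 * (i mod 6)) mod 6)%nat) by (rewrite Nat.Div0.mul_mod_idemp_r; auto).
  destruct (rcs_cases i) as [[E1 [E2 E3]]|[[E1 [E2 E3]]|[[E1 [E2 E3]]|[[E1 [E2 E3]]|[[E1 [E2 E3]]|[E1 [E2 E3]]]]]]];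
  rewrite E3 in Hm; destruct (rc_of _ _ Hm) as [G1 G2]; rewrite G1, G2; simpl;
  rewrite E1, E2; split; lra.
Qed.

Lemma rc_sq j : rc j * rc j + rs j * rs j = 1.
Proof. pose proof s3sq. rcase j; nra. Qed.

Definition Mf (x y : R) (j : nat) : affmap := AffMap x y (rc j) (- rs j) (rs j) (rc j).

Lemma Mf_comp x y i x' y' j :
  aff_comp (Mf x y i) (Mf x' y' j) = Mf (x + rc i * x' - rs i * y') (y + rs i * x' + rc i * y') (i + j).
Proof. unfold Mf, aff_comp; simpl. destruct (rc_add i j) as [A B]. rewrite A, B. f_equal; ring. Qed.

Lemma Mf_det x y i : aff_det (Mf x y i) = 1.
Proof. unfold aff_det, Mf; simpl. pose proof (rc_sq i). lra. Qed.

Lemma Mf_inv x y i : aff_inv (Mf x y i) = Mf (- (rc i * x + rs i * y)) (rs i * x - rc i * y) (5 * i).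
Proof.
  unfold aff_inv; rewrite Mf_det. destruct (rc_neg i) as [A B]. unfold Mf; rewrite A, B; simpl.
  f_equal; field.
Qed.

Lemma Mf_idx x y i j : (i mod 6 = j mod 6)%nat -> Mf x y i = Mf x y j.
Proof. intro H; destruct (rc_mod i j H) as [A B]; unfold Mf; rewrite A, B; auto. Qed.

Lemma Mf_inj x y i x' y' j : Mf x y i = Mf x' y' j -> x = x' /\ y = y' /\ rc i = rc j /\ rs i = rs j.
Proof. unfold Mf; intro H; injection H; intros; repeat split; auto. Qed.

Lemma Mf_id : Mf 0 0 0 = aff_id.
Proof. unfold Mf, aff_id, rc, rs; simpl; f_equal; ring. Qed.

Lemma half : / 2 * 2 = 1. Proof. field. Qed.
Ltac salg := pose proof s3sq; pose proof half; unfold Rdiv in *; nsatz.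

Definition Lp (x y : R) : Prop := exists m n : Z, x = IZR m + IZR n / 2 /\ y = IZR n * (sqrt 3 / 2).

Lemma Lp0 : Lp 0 0.
Proof. exists 0%Z, 0%Z; split; simpl; lra. Qed.
Lemma Lp_e1 : Lp 1 0.
Proof. exists 1%Z, 0%Z; split; simpl; lra. Qed.
Lemma Lp_e2 : Lp (1/2) (sqrt 3 / 2).
Proof. exists 0%Z, 1%Z; split; simpl; lra. Qed.
Lemma Lp_add x y x' y' : Lp x y -> Lp x' y' -> Lp (x + x') (y + y').
Proof. intros [m [n [-> ->]]] [m' [n' [-> ->]]]. exists (m + m')%Z, (n + n')%Z.
  rewrite !plus_IZR; split; lra. Qed.
Lemma Lp_opp x y : Lp x y -> Lp (- x) (- y).
Proof. intros [m [n [-> ->]]]. exists (- m)%Z, (- n)%Z. rewrite !opp_IZR; split; lra. Qed.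
Lemma Lp_zmul z x y : Lp x y -> Lp (IZR z * x) (IZR z * y).
Proof. intros [m [n [-> ->]]]. exists (z * m)%Z, (z * n)%Z. rewrite !mult_IZR; split; lra. Qed.
Lemma Lp_refl x y : Lp x y -> Lp x (- y).
Proof. intros [m [n [-> ->]]]. exists (m + n)%Z, (- n)%Z. rewrite !opp_IZR, plus_IZR; split; lra. Qed.
Lemma Lp_rot k x y : Lp x y -> Lp (rc k * x - rs k * y) (rs k * x + rc k * y).
Proof.
  intros [m [n [-> ->]]]. rcase k.
  - exists m, n. split; salg.
  - exists (- n)%Z, (m + n)%Z. rewrite opp_IZR, plus_IZR. split; salg.
  - exists (- (m + n))%Z, m. rewrite opp_IZR, plus_IZR. split; salg.
  - exists (- m)%Z, (- n)%Z. rewrite !opp_IZR. split; salg.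
  - exists n, (- (m + n))%Z. rewrite opp_IZR, plus_IZR. split; salg.
  - exists (m + n)%Z, (- m)%Z. rewrite opp_IZR, plus_IZR. split; salg.
Qed.

Lemma Lp_normZ x y : Lp x y -> exists N : Z, x * x + y * y = IZR N /\ (0 <= N)%Z /\ (N = 0%Z -> x = 0 /\ y = 0).
Proof.
  intros [m [n [-> ->]]]. exists (m * m + m * n + n * n)%Z. split; [|split].
  - rewrite !plus_IZR, !mult_IZR. salg.
  - nia.
  - intro H. assert (m = 0%Z /\ n = 0%Z) as [-> ->] by nia. simpl; split; lra.
Qed.

Lemma Lp_norm x y : Lp x y -> x * x + y * y = 0 \/ 1 <= x * x + y * y.
Proof.
  intro H; destruct (Lp_normZ _ _ H) as [N [E [P _]]]. rewrite E.
  destruct (Z.eq_dec N 0) as [->|Hn]; [left; reflexivity|right; apply IZR_le; lia].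
Qed.

Lemma Lp_norm0 x y : Lp x y -> x * x + y * y = 0 -> x = 0 /\ y = 0.
Proof. intros _ H. split; nra. Qed.

Lemma Lp_unit x y : Lp x y -> x * x + y * y = 1 -> exists j, x = rc j /\ y = rs j.
Proof.
  intros [m [n [-> ->]]] H.
  assert (Hz : (m * m + m * n + n * n = 1)%Z).
  { apply eq_IZR. rewrite !plus_IZR, !mult_IZR. rewrite <- H. salg. }
  assert (Hb : (-1 <= m <= 1 /\ -1 <= n <= 1)%Z) by nia.
  assert (C : ((m = 1 /\ n = 0) \/ (m = -1 /\ n = 0) \/ (m = 0 /\ n = 1) \/ (m = 0 /\ n = -1)
             \/ (m = 1 /\ n = -1) \/ (m = -1 /\ n = 1))%Z) by lia.
  destruct C as [[-> ->]|[[-> ->]|[[-> ->]|[[-> ->]|[[-> ->]|[-> ->]]]]]].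
  - exists 0%nat; unfold rc, rs; simpl; split; lra.
  - exists 3%nat; unfold rc, rs; simpl; split; lra.
  - exists 1%nat; unfold rc, rs; simpl; split; lra.
  - exists 4%nat; unfold rc, rs; simpl; split; lra.
  - exists 5%nat; unfold rc, rs; simpl; split; lra.
  - exists 2%nat; unfold rc, rs; simpl; split; lra.
Qed.

Lemma Lp_small x y : Lp x y -> -1 < x < 1 -> - (sqrt 3 / 2) < y < sqrt 3 / 2 -> x = 0 /\ y = 0.
Proof.
  intros [m [n [-> ->]]] Hx Hy. pose proof s3pos.
  assert (-1 < IZR n < 1).
  { split.
    - apply (Rmult_lt_reg_r (sqrt 3)); auto. lra.
    - apply (Rmult_lt_reg_r (sqrt 3)); auto. lra. }
  assert (n = 0%Z) by (destruct H0 as [A B]; apply lt_IZR in A; apply lt_IZR in B; lia). subst n.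
  simpl in *. assert (Hm: -1 < IZR m < 1) by lra.
  assert (m = 0%Z) by (destruct Hm as [A B]; apply lt_IZR in A; apply lt_IZR in B; lia). subst m.
  simpl; split; lra.
Qed.

Lemma rot60_Mf : rot60 = Mf 0 0 1.
Proof. unfold rot60, Mf, rc, rs; simpl. reflexivity. Qed.

Lemma rotk_Mf k : Nat.iter k (aff_comp rot60) aff_id = Mf 0 0 k.
Proof.
  induction k.
  - simpl. symmetry; apply Mf_id.
  - simpl Nat.iter. rewrite IHk, rot60_Mf, Mf_comp.
    replace (0 + rc 1 * 0 - rs 1 * 0) with 0 by ring.
    replace (0 + rs 1 * 0 + rc 1 * 0) with 0 by ring. reflexivity.
Qed.

Lemma inM_iff g : inM g <-> exists x y k, Lp x y /\ g = Mf x y k.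
Proof.
  split.
  - intros [m [n [k ->]]]. rewrite rotk_Mf.
    exists (IZR m + IZR n / 2), (IZR n * (sqrt 3 / 2)), k. split.
    + exists m, n; split; reflexivity.
    + unfold transl, Mf, aff_comp; simpl. f_equal; ring.
  - intros [x [y [k [[m [n [-> ->]]] ->]]]]. exists m, n, k. rewrite rotk_Mf.
    unfold transl, Mf, aff_comp; simpl. f_equal; ring.
Qed.

Lemma inM_Mf x y k : Lp x y -> inM (Mf x y k).
Proof. intro; apply inM_iff; eauto 6. Qed.

Lemma inM_Lp x y k : inM (Mf x y k) -> Lp x y.
Proof. intro H; apply inM_iff in H. destruct H as [x' [y' [k' [HL E]]]].
  apply Mf_inj in E. destruct E as [-> [-> _]]. auto. Qed.

Lemma inM_comp g h : inM g -> inM h -> inM (aff_comp g h).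
Proof.
  rewrite !inM_iff. intros [x [y [i [Hl ->]]]] [x' [y' [j [Hl' ->]]]].
  rewrite Mf_comp. do 3 eexists; split; [|reflexivity].
  replace (x + rc i * x' - rs i * y') with (x + (rc i * x' - rs i * y')) by ring.
  replace (y + rs i * x' + rc i * y') with (y + (rs i * x' + rc i * y')) by ring.
  apply Lp_add; auto. apply Lp_rot; auto.
Qed.

Lemma inM_det g : inM g -> aff_det g <> 0.
Proof. rewrite inM_iff. intros [x [y [i [_ ->]]]]. rewrite Mf_det; lra. Qed.

Lemma inM_inv g : inM g -> inM (aff_inv g).
Proof.
  rewrite !inM_iff. intros [x [y [i [Hl ->]]]]. rewrite Mf_inv.
  do 3 eexists; split; [|reflexivity].
  replace (- (rc i * x + rs i * y)) with (rc (5*i) * (-x) - rs (5*i) * (-y))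
    by (destruct (rc_neg i) as [A B]; rewrite A, B; ring).
  replace (rs i * x - rc i * y) with (rs (5*i) * (-x) + rc (5*i) * (-y))
    by (destruct (rc_neg i) as [A B]; rewrite A, B; ring).
  apply Lp_rot, Lp_opp; auto.
Qed.

Lemma inM_id : inM aff_id.
Proof. rewrite <- Mf_id. apply inM_Mf, Lp0. Qed.

Lemma inM_refl g : inM g -> inM (aff_comp refl_x (aff_comp g refl_x)).
Proof.
  rewrite !inM_iff. intros [x [y [i [Hl ->]]]].
  exists x, (- y), (5 * i)%nat. split. apply Lp_refl; auto.
  destruct (rc_neg i) as [A B]. unfold Mf; rewrite A, B. unfold refl_x, aff_comp; simpl. f_equal; ring.
Qed.

Definition Sr (e : bool) := if e then refl_x else aff_id.
Definition Nform x y j e := aff_comp (Mf x y j) (Sr e).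

Lemma Sr_inv e : aff_inv (Sr e) = Sr e.
Proof. destruct e; simpl; [apply inv_refl|apply inv_id]. Qed.
Lemma Sr_det e : aff_det (Sr e) <> 0.
Proof. destruct e; simpl; [apply det_refl|apply det_id]. Qed.
Lemma Sr_SS e : aff_comp (Sr e) (Sr e) = aff_id.
Proof. destruct e; simpl; [apply refl_refl|apply comp_id_l]. Qed.
Lemma Sr_conj e g : inM g -> inM (aff_comp (Sr e) (aff_comp g (Sr e))).
Proof. destruct e; simpl; intro H. apply inM_refl; auto. rewrite comp_id_l, comp_id_r; auto. Qed.

Lemma Nform_det x y j e : aff_det (Nform x y j e) <> 0.
Proof. unfold Nform. rewrite det_comp, Mf_det. pose proof (Sr_det e). lra. Qed.
Lemma Nform_inv x y j e : aff_inv (Nform x y j e) = aff_comp (Sr e) (aff_inv (Mf x y j)).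
Proof. unfold Nform. rewrite inv_comp, Sr_inv; auto. rewrite Mf_det; lra. apply Sr_det. Qed.

Lemma NA_Nform x y j e : Lp x y -> inNA (Nform x y j e).
Proof.
  intro Hl. split; [apply Nform_det|]. rewrite Nform_inv. unfold Nform. split; intros g Hg.
  - replace (aff_comp (aff_comp (Mf x y j) (Sr e)) (aff_comp g (aff_comp (Sr e) (aff_inv (Mf x y j)))))
      with (aff_comp (Mf x y j) (aff_comp (aff_comp (Sr e) (aff_comp g (Sr e))) (aff_inv (Mf x y j))))
      by (rewrite !comp_assoc; reflexivity).
    apply inM_comp. apply inM_Mf; auto. apply inM_comp. apply Sr_conj; auto. apply inM_inv, inM_Mf; auto.
  - replace (aff_comp (aff_comp (Sr e) (aff_inv (Mf x y j))) (aff_comp g (aff_comp (Mf x y j) (Sr e))))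
      with (aff_comp (Sr e) (aff_comp (aff_comp (aff_inv (Mf x y j)) (aff_comp g (Mf x y j))) (Sr e)))
      by (rewrite !comp_assoc; reflexivity).
    apply Sr_conj. apply inM_comp. apply inM_inv, inM_Mf; auto. apply inM_comp; auto. apply inM_Mf; auto.
Qed.

Lemma rc0 : rc 0 = 1. Proof. reflexivity. Qed.
Lemma rs0 : rs 0 = 0. Proof. reflexivity. Qed.
Lemma rc1 : rc 1 = 1/2. Proof. reflexivity. Qed.
Lemma rs1 : rs 1 = sqrt 3 / 2. Proof. reflexivity. Qed.
Lemma rc5 : rc 5 = 1/2. Proof. reflexivity. Qed.
Lemma rs5 : rs 5 = - (sqrt 3 / 2). Proof. reflexivity. Qed.

Lemma conj_transl f v1 v2 : aff_det f <> 0 ->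
  aff_comp f (aff_comp (Mf v1 v2 0) (aff_inv f)) = Mf (m11 f * v1 + m12 f * v2) (m21 f * v1 + m22 f * v2) 0.
Proof.
  unfold Mf; rewrite rc0, rs0. destruct f; unfold aff_comp, aff_inv; simpl; unfold aff_det in *; simpl in *.
  intro; f_equal; field; auto.
Qed.

Lemma conj_transl_inv f v1 v2 : aff_det f <> 0 ->
  aff_comp (aff_inv f) (aff_comp (Mf v1 v2 0) f) =
  Mf ((m22 f * v1 - m12 f * v2) / aff_det f) ((- m21 f * v1 + m11 f * v2) / aff_det f) 0.
Proof.
  unfold Mf; rewrite rc0, rs0. destruct f; unfold aff_comp, aff_inv; simpl; unfold aff_det in *; simpl in *.
  intro; f_equal; field; auto.
Qed.

Lemma CL f : inNA f -> exists x y j e, Lp x y /\ f = Nform x y j e.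
Proof.
  intros [Hd [H1 H2]].
  pose proof s3sq as Hs; pose proof half as Hh; pose proof s3pos as Hsp.
  assert (HA := H1 _ (inM_Mf 1 0 0 Lp_e1)). rewrite conj_transl in HA by auto. apply inM_Lp in HA.
  assert (HB := H2 _ (inM_Mf 1 0 0 Lp_e1)). rewrite conj_transl_inv in HB by auto. apply inM_Lp in HB.
  assert (HR := H1 _ (inM_Mf 0 0 1 Lp0)). apply inM_iff in HR. destruct HR as [x [y [j [Hxy E]]]].
  apply conj_eq in E; auto.
  destruct f as [p1 p2 a b c d]. unfold is_affine, aff_det in *; simpl in *.
  unfold Mf, aff_comp in E; simpl in E. rewrite rc1, rs1 in E.
  injection E; clear E; intros E6 E5 E4 E3 E2 E1.
  replace (a * 1 + b * 0) with a in HA by ring. replace (c * 1 + d * 0) with c in HA by ring.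
  replace (d * 1 - b * 0) with d in HB by ring. replace (- c * 1 + a * 0) with (- c) in HB by ring.
  pose proof (Lp_rot j x y Hxy) as Hb.
  rcase j;
  try (exfalso; apply Hd;
       assert (a = 0) by (clear -E1 E2 E3 E4 E5 E6 Hs Hh; unfold Rdiv in *; nsatz); assert (b = 0) by (clear -E1 E2 E3 E4 E5 E6 Hs Hh; unfold Rdiv in *; nsatz);
       assert (c = 0) by (clear -E1 E2 E3 E4 E5 E6 Hs Hh; unfold Rdiv in *; nsatz); assert (d = 0) by (clear -E1 E2 E3 E4 E5 E6 Hs Hh; unfold Rdiv in *; nsatz);
       subst; ring).
  -
    assert (d = a) by (clear -E1 E2 E3 E4 E5 E6 Hs Hh; unfold Rdiv in *; nsatz). assert (b = - c) by (clear -E1 E2 E3 E4 E5 E6 Hs Hh; unfold Rdiv in *; nsatz). subst d b.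
    assert (HN : a * a + c * c <> 0) by (intro; apply Hd; lra).
    destruct (Lp_norm _ _ HA) as [|HN1]; [contradiction|].
    destruct (Lp_norm _ _ HB) as [HN2|HN2].
    + exfalso. replace ((a / (a * a - - c * c)) * (a / (a * a - - c * c)) + (- c / (a * a - - c * c)) * (- c / (a * a - - c * c)))
        with (1 / (a * a + c * c)) in HN2 by (field; auto).
      unfold Rdiv in HN2. rewrite Rmult_1_l in HN2. apply Rinv_neq_0_compat in HN; auto.
    + replace ((a / (a * a - - c * c)) * (a / (a * a - - c * c)) + (- c / (a * a - - c * c)) * (- c / (a * a - - c * c)))
        with (1 / (a * a + c * c)) in HN2 by (field; auto).
      assert (a * a + c * c = 1).
      { assert (1 * (a*a+c*c) <= 1 / (a * a + c * c) * (a*a+c*c)) by (apply Rmult_le_compat_r; lra).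
        replace (1 / (a * a + c * c) * (a * a + c * c)) with 1 in H by (field; auto). lra. }
      destruct (Lp_unit _ _ HA H) as [j' [-> ->]].
      assert (p1 = 1 / 2 * x - sqrt 3 / 2 * y) by (clear -E1 E2 E3 E4 E5 E6 Hs Hh; unfold Rdiv in *; nsatz).
      assert (p2 = sqrt 3 / 2 * x + 1 / 2 * y) by (clear -E1 E2 E3 E4 E5 E6 Hs Hh; unfold Rdiv in *; nsatz).
      exists p1, p2, j', false. split. subst p1 p2; auto.
      unfold Nform, Sr, Mf, aff_comp, aff_id; simpl. f_equal; ring.
  -
    assert (d = - a) by (clear -E1 E2 E3 E4 E5 E6 Hs Hh; unfold Rdiv in *; nsatz). assert (b = c) by (clear -E1 E2 E3 E4 E5 E6 Hs Hh; unfold Rdiv in *; nsatz). subst d b.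
    assert (HN : a * a + c * c <> 0) by (intro; apply Hd; lra).
    destruct (Lp_norm _ _ HA) as [|HN1]; [contradiction|].
    destruct (Lp_norm _ _ HB) as [HN2|HN2].
    + exfalso. replace ((- a / (a * - a - c * c)) * (- a / (a * - a - c * c)) + (- c / (a * - a - c * c)) * (- c / (a * - a - c * c)))
        with (1 / (a * a + c * c)) in HN2 by (field; auto).
      unfold Rdiv in HN2. rewrite Rmult_1_l in HN2. apply Rinv_neq_0_compat in HN; auto.
    + replace ((- a / (a * - a - c * c)) * (- a / (a * - a - c * c)) + (- c / (a * - a - c * c)) * (- c / (a * - a - c * c)))
        with (1 / (a * a + c * c)) in HN2 by (field; auto).
      assert (a * a + c * c = 1).
      { assert (1 * (a*a+c*c) <= 1 / (a * a + c * c) * (a*a+c*c)) by (apply Rmult_le_compat_r; lra).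
        replace (1 / (a * a + c * c) * (a * a + c * c)) with 1 in H by (field; auto). lra. }
      destruct (Lp_unit _ _ HA H) as [j' [-> ->]].
      assert (p1 = 1 / 2 * x - - (sqrt 3 / 2) * y) by (clear -E1 E2 E3 E4 E5 E6 Hs Hh; unfold Rdiv in *; nsatz).
      assert (p2 = - (sqrt 3 / 2) * x + 1 / 2 * y) by (clear -E1 E2 E3 E4 E5 E6 Hs Hh; unfold Rdiv in *; nsatz).
      exists p1, p2, j', true. split. subst p1 p2; auto.
      unfold Nform, Sr, Mf, aff_comp, refl_x; simpl. f_equal; ring.
Qed.

Lemma no_refl : ~ (forall x, exists g, inM g /\ aff_app g x = aff_app refl_x x).
Proof.
  intro H. destruct (H (1/5, 1/10)) as [g [Hg E]].
  apply inM_iff in Hg. destruct Hg as [u1 [u2 [k [Hl ->]]]].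
  unfold Mf, aff_app, refl_x in E; simpl in E. injection E; clear E; intros E2 E1.
  pose proof s3b. pose proof s3sq.
  rcase k;
  (destruct (Lp_small u1 u2 Hl) as [-> ->]; [lra|lra|lra]).
Qed.

Lemma Nform_iso x y j e p q :
  edist (aff_app (Nform x y j e) p) (aff_app (Nform x y j e) q) = edist p q.
Proof.
  unfold edist. f_equal. destruct p as [p1 p2], q as [q1 q2].
  pose proof (rc_sq j).
  unfold Nform, Sr, Mf, aff_comp, aff_app; destruct e; unfold refl_x, aff_id; simpl; nsatz.
Qed.

Lemma inv_inv f : aff_det f <> 0 -> aff_inv (aff_inv f) = f.
Proof. destruct f; unfold aff_inv; simpl; unfold aff_det in *; simpl in *. intro; f_equal; field; auto. Qed.

Lemma out_of_M f g : aff_det f <> 0 -> aff_det g <> 0 -> inM (aff_comp f (aff_inv g)) ->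
  out_eq (conj_by f) (conj_by g).
Proof.
  intros Hf Hg H. exists (aff_comp f (aff_inv g)). split; auto. intros k _.
  unfold conj_by. rewrite inv_comp, inv_inv; auto; [|apply det_inv; auto].
  rewrite <- !comp_assoc. rewrite (comp_assoc (aff_inv g) g), inv_l, comp_id_l; auto.
  rewrite (comp_assoc (aff_inv g) g), inv_l, comp_id_l; auto.
Qed.

Lemma Nform_same x y j x' y' j' e : Lp x y -> Lp x' y' ->
  inM (aff_comp (Nform x y j e) (aff_inv (Nform x' y' j' e))).
Proof.
  intros. rewrite Nform_inv. unfold Nform.
  replace (aff_comp (aff_comp (Mf x y j) (Sr e)) (aff_comp (Sr e) (aff_inv (Mf x' y' j'))))
    with (aff_comp (Mf x y j) (aff_comp (aff_comp (Sr e) (Sr e)) (aff_inv (Mf x' y' j'))))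
    by (rewrite !comp_assoc; reflexivity).
  rewrite Sr_SS, comp_id_l. apply inM_comp. apply inM_Mf; auto. apply inM_inv, inM_Mf; auto.
Qed.

Lemma refl_conj_Mf x y i : aff_comp refl_x (aff_comp (Mf x y i) refl_x) = Mf x (- y) (5 * i).
Proof. destruct (rc_neg i) as [A B]. unfold Mf; rewrite A, B. unfold refl_x, aff_comp; simpl. f_equal; ring. Qed.

Lemma conj_keep_idx h x y i : inM h ->
  exists X Y, aff_comp h (aff_comp (Mf x y i) (aff_inv h)) = Mf X Y i.
Proof.
  rewrite inM_iff. intros [u1 [u2 [k [_ ->]]]]. rewrite Mf_inv, !Mf_comp.
  do 2 eexists. apply Mf_idx.
  replace (k + (i + 5 * k))%nat with (i + k * 6)%nat by lia. apply Nat.Div0.mod_add.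
Qed.

Lemma conj_rot_idx x y j e : Lp x y -> exists X Y,
  conj_by (Nform x y j e) (Mf 0 0 1) = Mf X Y (if e then 5 else 1).
Proof.
  intro Hl. unfold conj_by. rewrite Nform_inv. unfold Nform.
  replace (aff_comp (aff_comp (Mf x y j) (Sr e)) (aff_comp (Mf 0 0 1) (aff_comp (Sr e) (aff_inv (Mf x y j)))))
    with (aff_comp (Mf x y j) (aff_comp (aff_comp (Sr e) (aff_comp (Mf 0 0 1) (Sr e))) (aff_inv (Mf x y j))))
    by (rewrite !comp_assoc; reflexivity).
  assert (exists a b, aff_comp (Sr e) (aff_comp (Mf 0 0 1) (Sr e)) = Mf a b (if e then 5 else 1)) as [a [b ->]].
  { destruct e; simpl. rewrite refl_conj_Mf. eauto. rewrite comp_id_l, comp_id_r. eauto. }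
  apply conj_keep_idx. apply inM_Mf; auto.
Qed.

Lemma part_refl_id : inNA aff_id.
Proof.
  replace aff_id with (Nform 0 0 0 false). apply NA_Nform, Lp0.
  unfold Nform, Sr. rewrite Mf_id, comp_id_l. reflexivity.
Qed.

Lemma part_refl : inNA refl_x.
Proof.
  replace refl_x with (Nform 0 0 0 true). apply NA_Nform, Lp0.
  unfold Nform, Sr. rewrite Mf_id, comp_id_l. reflexivity.
Qed.

Lemma part_distinct : ~ induced_eq aff_id refl_x.
Proof.
  intro H. apply no_refl. intro x. destruct (H x) as [g [Hg E]]. rewrite app_id in E. eauto.
Qed.

Lemma part_class f : inNA f -> induced_eq f aff_id \/ induced_eq f refl_x.
Proof.
  intro H. destruct (CL f H) as [x [y [j [e [Hl ->]]]]].
  assert (G : induced_eq (Nform x y j e) (Sr e)).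
  { intro p. exists (aff_inv (Mf x y j)). split. apply inM_inv, inM_Mf; auto.
    unfold Nform. rewrite app_comp, app_inv_l; auto. rewrite Mf_det; lra. }
  destruct e; [right|left]; exact G.
Qed.

Lemma part_iso f : inNA f -> induced_isometry f.
Proof.
  intro H. pose proof H as [Hd [H1 H2]]. destruct (CL f H) as [x0 [y0 [j [e [Hl Ef]]]]].
  assert (Iso : forall p q, edist (aff_app f p) (aff_app f q) = edist p q) by (intros; rewrite Ef; apply Nform_iso).
  intros x y. unfold qdist. apply Glb_Rbar_eqset. intro r. split.
  - intros [g [Hg ->]]. exists (aff_comp (aff_inv f) (aff_comp g f)). split; auto.
    rewrite <- (app_inv_r f (aff_app g (aff_app f y))) by auto.
    rewrite Iso, !app_comp. reflexivity.
  - intros [g [Hg ->]]. exists (aff_comp f (aff_comp g (aff_inv f))). split; auto.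
    rewrite !app_comp, app_inv_l by auto. rewrite Iso. reflexivity.
Qed.

Lemma part_welldef f g : inNA f -> inNA g -> induced_eq f g -> out_eq (conj_by f) (conj_by g).
Proof.
  intros Hf Hg Hi. destruct (CL f Hf) as [x [y [j [e [Hl ->]]]]].
  destruct (CL g Hg) as [x' [y' [j' [e' [Hl' ->]]]]].
  destruct (Bool.bool_dec e e') as [<-|Hne].
  - apply out_of_M; try apply Nform_det. apply Nform_same; auto.
  - exfalso. apply no_refl. intro p.
    assert (Hm : inM (Mf x y j)) by (apply inM_Mf; auto).
    assert (Hm' : inM (Mf x' y' j')) by (apply inM_Mf; auto).
    destruct e, e'; try congruence; simpl in Hi.
    +
      destruct (Hi p) as [h [Hh E]]. unfold Nform in E; simpl Sr in E; rewrite !app_comp, ?app_id in E.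
      set (k := aff_comp (aff_inv (Mf x' y' j')) (aff_comp h (Mf x y j))).
      assert (Hk : inM k) by (apply inM_comp; [apply inM_inv|apply inM_comp]; auto).
      assert (Ek : aff_app k (aff_app refl_x p) = p).
      { unfold k. rewrite !app_comp, E, app_inv_l; auto. apply inM_det; auto. }
      exists (aff_inv k). split. apply inM_inv; auto.
      rewrite <- Ek at 1. rewrite app_inv_l; auto. apply inM_det; auto.
    + destruct (Hi p) as [h [Hh E]]. unfold Nform in E; simpl Sr in E; rewrite !app_comp, ?app_id in E.
      exists (aff_comp (aff_inv (Mf x' y' j')) (aff_comp h (Mf x y j))). split.
      apply inM_comp; [apply inM_inv|apply inM_comp]; auto.
      rewrite !app_comp, E, app_inv_l; auto. apply inM_det; auto.
Qed.

Lemma part_hom f g : inNA f -> inNA g ->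
  out_eq (conj_by (aff_comp f g)) (fun x => conj_by f (conj_by g x)).
Proof.
  intros [Hf _] [Hg _]. exists aff_id. split. apply inM_id. intros k _.
  rewrite inv_id, comp_id_l, comp_id_r. unfold conj_by. rewrite inv_comp; auto.
  rewrite <- !comp_assoc. reflexivity.
Qed.

Lemma part_inj f g : inNA f -> inNA g -> out_eq (conj_by f) (conj_by g) -> induced_eq f g.
Proof.
  intros Hf Hg Ho. destruct (CL f Hf) as [x [y [j [e [Hl ->]]]]].
  destruct (CL g Hg) as [x' [y' [j' [e' [Hl' ->]]]]].
  destruct (Bool.bool_dec e e') as [<-|Hne].
  - intro p. exists (aff_comp (Nform x' y' j' e) (aff_inv (Nform x y j e))). split.
    apply Nform_same; auto.
    rewrite app_comp, app_inv_l; auto. apply Nform_det.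
  - exfalso. destruct Ho as [h [Hh E]].
    specialize (E (Mf 0 0 1) (inM_Mf 0 0 1 Lp0)).
    destruct (conj_rot_idx x y j e Hl) as [X [Y E1]].
    destruct (conj_rot_idx x' y' j' e' Hl') as [X' [Y' E2]].
    rewrite E1, E2 in E. destruct (conj_keep_idx h X' Y' (if e' then 5%nat else 1%nat) Hh) as [Z [W E3]].
    rewrite E3 in E. apply Mf_inj in E. destruct E as [_ [_ [_ E]]].
    pose proof s3pos.
    destruct e, e'; try congruence; simpl in E; rewrite ?rs1, ?rs5 in E; lra.
Qed.

Definition apow (g : affmap) (n : nat) := Nat.iter n (aff_comp g) aff_id.

Lemma apow_S g n : apow g (S n) = aff_comp g (apow g n).
Proof. reflexivity. Qed.

Lemma apow_inM g n : inM g -> inM (apow g n).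
Proof. intro H; induction n. apply inM_id. rewrite apow_S; apply inM_comp; auto. Qed.

Lemma Mf_eq x y i x' y' j : x = x' -> y = y' -> (i mod 6 = j mod 6)%nat -> Mf x y i = Mf x' y' j.
Proof. intros -> -> H; apply Mf_idx; auto. Qed.

Lemma Mf_inv0 x y : aff_inv (Mf x y 0) = Mf (-x) (-y) 0.
Proof. rewrite Mf_inv. apply Mf_eq; [rewrite rc0, rs0; ring|rewrite rc0, rs0; ring|reflexivity]. Qed.

Lemma apow_trans u1 u2 n : apow (Mf u1 u2 0) n = Mf (INR n * u1) (INR n * u2) 0.
Proof.
  induction n.
  - simpl. rewrite <- Mf_id. apply Mf_eq; simpl; [ring|ring|reflexivity].
  - rewrite apow_S, IHn, Mf_comp. apply Mf_eq; [rewrite rc0, rs0, S_INR; ring|rewrite rc0, rs0, S_INR; ring|reflexivity].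
Qed.

Lemma apow_rot u1 u2 k : (k mod 6 <> 0)%nat -> apow (Mf u1 u2 k) 6 = aff_id.
Proof.
  intro Hk. unfold apow; simpl Nat.iter. rewrite comp_id_r, !Mf_comp, <- Mf_id.
  pose proof s3sq as Hs; pose proof half as Hh.
  apply Mf_eq.
  3: { replace (k + (k + (k + (k + (k + k)))))%nat with (0 + k * 6)%nat by lia. rewrite Nat.Div0.mod_add. reflexivity. }
  all: rcase k; [exfalso; auto| | | | |]; clear -Hs Hh; unfold Rdiv in *; nsatz.
Qed.

Lemma inv_unique_l f g : aff_det g <> 0 -> aff_comp f g = aff_id -> f = aff_inv g.
Proof. intros Hd H. rewrite <- (comp_id_r f), <- (inv_r g), comp_assoc, H, comp_id_l; auto. Qed.


Lemma a_M (alpha : affmap -> affmap) (HA : is_autM alpha) g : inM g -> inM (alpha g).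
Proof. destruct HA as [H _]; auto. Qed.
Lemma a_hom (alpha : affmap -> affmap) (HA : is_autM alpha) g h : inM g -> inM h -> alpha (aff_comp g h) = aff_comp (alpha g) (alpha h).
Proof. destruct HA as [_ [H _]]; auto. Qed.
Lemma a_inj (alpha : affmap -> affmap) (HA : is_autM alpha) g h : inM g -> inM h -> alpha g = alpha h -> g = h.
Proof. destruct HA as [_ [_ [H _]]]; auto. Qed.
Lemma a_surj (alpha : affmap -> affmap) (HA : is_autM alpha) h : inM h -> exists g, inM g /\ alpha g = h.
Proof. destruct HA as [_ [_ [_ H]]]; auto. Qed.

Lemma a_id (alpha : affmap -> affmap) (HA : is_autM alpha) : alpha aff_id = aff_id.
Proof.
  set (z := alpha aff_id).
  assert (Hz : z = aff_comp z z) by (unfold z; rewrite <- (a_hom alpha HA), comp_id_l; auto; apply inM_id).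
  assert (Hd : aff_det z <> 0) by (apply inM_det, (a_M alpha HA), inM_id).
  assert (H : aff_comp (aff_inv z) z = aff_comp (aff_inv z) (aff_comp z z)) by (rewrite <- Hz; reflexivity).
  rewrite comp_assoc, inv_l, comp_id_l in H; auto.
Qed.

Lemma a_apow (alpha : affmap -> affmap) (HA : is_autM alpha) g n : inM g -> alpha (apow g n) = apow (alpha g) n.
Proof.
  intro H. induction n. apply (a_id alpha HA). rewrite !apow_S, (a_hom alpha HA), IHn; auto. apply apow_inM; auto.
Qed.

Lemma a_inv (alpha : affmap -> affmap) (HA : is_autM alpha) g : inM g -> alpha (aff_inv g) = aff_inv (alpha g).
Proof.
  intro H. apply inv_unique_l. apply inM_det, (a_M alpha HA); auto.
  rewrite <- (a_hom alpha HA), inv_l, (a_id alpha HA); auto. apply inM_det; auto. apply inM_inv; auto.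
Qed.

Lemma a_trans (alpha : affmap -> affmap) (HA : is_autM alpha) u1 u2 : Lp u1 u2 -> (u1 <> 0 \/ u2 <> 0) ->
  exists p1 p2, Lp p1 p2 /\ alpha (Mf u1 u2 0) = Mf p1 p2 0.
Proof.
  intros Hl Hn. assert (H := (a_M alpha HA) _ (inM_Mf u1 u2 0 Hl)). apply inM_iff in H.
  destruct H as [p1 [p2 [k [Hp E]]]]. exists p1, p2. split; auto. rewrite E.
  destruct (Nat.eq_dec (k mod 6) 0) as [Hk|Hk]. apply Mf_idx; auto.
  exfalso. assert (E6 : apow (alpha (Mf u1 u2 0)) 6 = aff_id) by (rewrite E; apply apow_rot; auto).
  rewrite <- (a_apow alpha HA), <- (a_id alpha HA) in E6 by (apply inM_Mf; auto).
  apply (a_inj alpha HA) in E6; [|apply apow_inM, inM_Mf; auto|apply inM_id].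
  rewrite apow_trans in E6. unfold Mf, aff_id in E6. injection E6. intros. simpl in *.
  destruct Hn; lra.
Qed.

Lemma a_pre_trans (alpha : affmap -> affmap) (HA : is_autM alpha) g x y : inM g -> alpha g = Mf x y 0 -> (x <> 0 \/ y <> 0) ->
  exists u1 u2, Lp u1 u2 /\ g = Mf u1 u2 0.
Proof.
  intros Hg E Hn. pose proof Hg as H. apply inM_iff in H. destruct H as [u1 [u2 [k [Hl ->]]]].
  exists u1, u2. split; auto.
  destruct (Nat.eq_dec (k mod 6) 0) as [Hk|Hk]. apply Mf_idx; auto.
  exfalso. assert (E6 := (a_apow alpha HA) _ 6 Hg). rewrite apow_rot, (a_id alpha HA), E, apow_trans in E6 by auto.
  unfold Mf, aff_id in E6. injection E6. intros. simpl in *. destruct Hn; lra.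
Qed.

Lemma a_gen (alpha : affmap -> affmap) (HA : is_autM alpha) v1 v2 w1 w2 : Lp v1 v2 -> alpha (Mf v1 v2 0) = Mf w1 w2 0 ->
  forall m : Z, alpha (Mf (IZR m * v1) (IZR m * v2) 0) = Mf (IZR m * w1) (IZR m * w2) 0.
Proof.
  intros Hl Hv.
  assert (Hn : forall n : nat, alpha (Mf (INR n * v1) (INR n * v2) 0) = Mf (INR n * w1) (INR n * w2) 0).
  { intro n. rewrite <- apow_trans, (a_apow alpha HA), Hv, apow_trans; auto. apply inM_Mf; auto. }
  intro m. destruct (Z_le_gt_dec 0 m) as [Hm|Hm].
  - replace (IZR m) with (INR (Z.to_nat m)) by (rewrite INR_IZR_INZ, Z2Nat.id; auto). apply Hn.
  - replace (IZR m) with (- INR (Z.to_nat (- m))) by (rewrite INR_IZR_INZ, Z2Nat.id by lia; rewrite opp_IZR; ring).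
    replace (Mf (- INR (Z.to_nat (- m)) * v1) (- INR (Z.to_nat (- m)) * v2) 0)
      with (aff_inv (Mf (INR (Z.to_nat (- m)) * v1) (INR (Z.to_nat (- m)) * v2) 0))
      by (rewrite Mf_inv0; apply Mf_eq; [ring|ring|reflexivity]).
    rewrite (a_inv alpha HA), Hn, Mf_inv0. apply Mf_eq; [ring|ring|reflexivity].
    rewrite INR_IZR_INZ. apply inM_Mf, Lp_zmul; auto.
Qed.


Lemma rc_ofk j k : (j mod 6 = k)%nat -> rc j = rc' k /\ rs j = rs' k.
Proof. unfold rc, rs; intros ->; auto. Qed.

Lemma conj_hom f a b : aff_det f <> 0 ->
  conj_by f (aff_comp a b) = aff_comp (conj_by f a) (conj_by f b).
Proof.
  intro Hd. unfold conj_by. rewrite <- !comp_assoc.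
  rewrite (comp_assoc (aff_inv f) f), inv_l, comp_id_l; auto.
Qed.

Lemma conj_apow f a k : aff_det f <> 0 -> conj_by f (apow a k) = apow (conj_by f a) k.
Proof.
  intro Hd. induction k.
  - unfold conj_by; simpl. rewrite comp_id_l, inv_r; auto.
  - rewrite !apow_S, conj_hom, IHk; auto.
Qed.

Lemma apow_rot1 k : apow (Mf 0 0 1) k = Mf 0 0 k.
Proof. unfold apow. rewrite <- rot60_Mf. apply rotk_Mf. Qed.

Lemma Mf_split x y k : Mf x y k = aff_comp (Mf x y 0) (apow (Mf 0 0 1) k).
Proof. rewrite apow_rot1, Mf_comp. apply Mf_eq; [rewrite rc0, rs0; ring|rewrite rc0, rs0; ring|reflexivity]. Qed.

Lemma final_step alpha (HA : is_autM alpha) p1 p2 q1 q2 w1 w2 j j' e :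
  alpha (Mf 0 0 1) = Mf w1 w2 j ->
  (forall m n : Z, alpha (Mf (IZR m + IZR n / 2) (IZR n * (sqrt 3 / 2)) 0) =
                   Mf (IZR m * p1 + IZR n * q1) (IZR m * p2 + IZR n * q2) 0) ->
  Lp w1 w2 -> p1 = rc j' -> p2 = rs j' ->
  q1 = rc j * p1 - rs j * p2 -> q2 = rs j * p1 + rc j * p2 ->
  (e = false /\ (j mod 6 = 1)%nat) \/ (e = true /\ (j mod 6 = 5)%nat) ->
  exists f, inNA f /\ out_eq alpha (conj_by f).
Proof.
  intros Hw Hlin Hlw Hp1 Hp2 Hq1 Hq2 Hj.
  pose proof (Lp_rot j w1 w2 Hlw) as Hc.
  set (c1 := rc j * w1 - rs j * w2) in *. set (c2 := rs j * w1 + rc j * w2) in *.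
  exists (Nform c1 c2 j' e). split. apply NA_Nform; auto.
  exists aff_id. split. apply inM_id. intros g Hg. rewrite inv_id, comp_id_l, comp_id_r.
  pose proof Hg as H. apply inM_iff in H. destruct H as [x [y [k [[m [n [-> ->]]] ->]]]].
  assert (Hd := Nform_det c1 c2 j' e).
  rewrite Mf_split, conj_hom, conj_apow, a_hom, a_apow, Hw, Hlin; auto;
    [| apply inM_Mf, Lp0 | apply inM_Mf; exists m, n; auto | apply apow_inM, inM_Mf, Lp0].
  f_equal.
  - unfold conj_by; rewrite conj_transl; auto. apply Mf_eq; [| |reflexivity];
    unfold Nform, Sr, Mf, aff_comp; destruct Hj as [[-> E3]|[-> E3]]; unfold aff_id, refl_x; simpl;
    subst q1 q2 p1 p2; rewrite (proj1 (rc_ofk _ _ E3)), (proj2 (rc_ofk _ _ E3)); simpl. all: field.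
  - f_equal. unfold conj_by. rewrite Nform_inv. unfold Nform.
    replace (aff_comp (aff_comp (Mf c1 c2 j') (Sr e)) (aff_comp (Mf 0 0 1) (aff_comp (Sr e) (aff_inv (Mf c1 c2 j')))))
      with (aff_comp (Mf c1 c2 j') (aff_comp (aff_comp (Sr e) (aff_comp (Mf 0 0 1) (Sr e))) (aff_inv (Mf c1 c2 j'))))
      by (rewrite !comp_assoc; reflexivity).
    pose proof (rc_sq j') as Hsq. pose proof s3sq as Hs; pose proof half as Hh.
    destruct Hj as [[-> E3]|[-> E3]]; simpl Sr.
    + rewrite comp_id_l, comp_id_r, Mf_inv, !Mf_comp.
      unfold c1, c2 in *; rewrite (proj1 (rc_ofk _ _ E3)), (proj2 (rc_ofk _ _ E3)) in *; cbn [rc' rs'].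
      rewrite rc1, rs1. apply Mf_eq.
      3: { rewrite E3. replace (j' + (1 + 5 * j'))%nat with (1 + j' * 6)%nat by lia.
           rewrite Nat.Div0.mod_add. reflexivity. }
      all: clear -Hsq Hs Hh; unfold Rdiv in *; nsatz.
    + rewrite refl_conj_Mf, Mf_inv, !Mf_comp.
      unfold c1, c2 in *; rewrite (proj1 (rc_ofk _ _ E3)), (proj2 (rc_ofk _ _ E3)) in *; cbn [rc' rs'].
      replace (rc (5 * 1)) with (1/2) by reflexivity. replace (rs (5 * 1)) with (- (sqrt 3 / 2)) by reflexivity.
      apply Mf_eq.
      3: { rewrite E3. replace (j' + (5 * 1 + 5 * j'))%nat with (5 + j' * 6)%nat by lia.
           rewrite Nat.Div0.mod_add. reflexivity. }
      all: clear -Hsq Hs Hh; unfold Rdiv in *; nsatz.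
Qed.

Lemma good_case p1 p2 q1 q2 (m n : Z) c s' : Lp p1 p2 -> c = 1/2 -> c * c + s' * s' = 1 ->
  q1 = c * p1 - s' * p2 -> q2 = s' * p1 + c * p2 ->
  IZR m * p1 + IZR n * q1 = 1 -> IZR m * p2 + IZR n * q2 = 0 -> p1 * p1 + p2 * p2 = 1.
Proof.
  intros Hp Hc Hcs Hq1 Hq2 S1 S2.
  assert (Id : (IZR m * p1 + IZR n * q1) * (IZR m * p1 + IZR n * q1) + (IZR m * p2 + IZR n * q2) * (IZR m * p2 + IZR n * q2)
               = (p1 * p1 + p2 * p2) * IZR (m * m + m * n + n * n)).
  { rewrite !plus_IZR, !mult_IZR. subst q1 q2. pose proof half. unfold Rdiv in *. subst c. nsatz. }
  rewrite S1, S2 in Id.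
  destruct (Lp_norm _ _ Hp) as [H0|H1].
  - exfalso. rewrite H0 in Id. lra.
  - assert (Hk : (0 <= m * m + m * n + n * n)%Z) by nia.
    destruct (Z.eq_dec (m * m + m * n + n * n) 0) as [Hz|Hz].
    + rewrite Hz in Id; simpl in Id. lra.
    + assert (1 <= IZR (m * m + m * n + n * n)) by (apply IZR_le; lia).
      nra.
Qed.

Lemma part_surj alpha : is_autM alpha -> exists f, inNA f /\ out_eq alpha (conj_by f).
Proof.
  intro HA. pose proof s3sq as Hs; pose proof s3pos as Hsp; pose proof half as Hh.
  destruct (a_trans alpha HA 1 0 Lp_e1 (or_introl R1_neq_R0)) as [p1 [p2 [Hp Ep]]].
  destruct (a_trans alpha HA (1/2) (sqrt 3/2) Lp_e2 (or_introl (ltac:(lra) : 1/2 <> 0))) as [q1 [q2 [Hq Eq]]].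
  assert (Hlin : forall m n : Z, alpha (Mf (IZR m + IZR n / 2) (IZR n * (sqrt 3 / 2)) 0) =
                   Mf (IZR m * p1 + IZR n * q1) (IZR m * p2 + IZR n * q2) 0).
  { intros m n.
    replace (Mf (IZR m + IZR n / 2) (IZR n * (sqrt 3 / 2)) 0)
      with (aff_comp (Mf (IZR m * 1) (IZR m * 0) 0) (Mf (IZR n * (1/2)) (IZR n * (sqrt 3/2)) 0))
      by (rewrite Mf_comp; apply Mf_eq; [rewrite rc0, rs0; field|rewrite rc0, rs0; field|reflexivity]).
    rewrite a_hom; [| auto | apply inM_Mf, Lp_zmul, Lp_e1 | apply inM_Mf, Lp_zmul, Lp_e2].
    rewrite (a_gen _ HA _ _ _ _ Lp_e1 Ep), (a_gen _ HA _ _ _ _ Lp_e2 Eq), Mf_comp.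
    apply Mf_eq; [rewrite rc0, rs0; field|rewrite rc0, rs0; field|reflexivity]. }
  assert (Hr := a_M _ HA _ (inM_Mf 0 0 1 Lp0)). apply inM_iff in Hr. destruct Hr as [w1 [w2 [j [Hw Ew]]]].
  assert (R1 : aff_comp (Mf 0 0 1) (Mf 1 0 0) = aff_comp (Mf (1/2) (sqrt 3/2) 0) (Mf 0 0 1))
    by (rewrite !Mf_comp; apply Mf_eq; [rewrite rc0, rs0, rc1, rs1; field|rewrite rc0, rs0, rc1, rs1; field|reflexivity]).
  apply (f_equal alpha) in R1. rewrite !(a_hom _ HA) in R1 by (apply inM_Mf; auto using Lp0, Lp_e1, Lp_e2).
  rewrite Ew, Ep, Eq, !Mf_comp, rc0, rs0 in R1. apply Mf_inj in R1. destruct R1 as [R1a [R1b _]].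
  assert (R2 : aff_comp (Mf 0 0 1) (Mf (1/2) (sqrt 3/2) 0) =
               aff_comp (Mf (IZR (-1) + IZR 1 / 2) (IZR 1 * (sqrt 3 / 2)) 0) (Mf 0 0 1)).
  { rewrite !Mf_comp; apply Mf_eq; [| |reflexivity]; rewrite rc0, rs0, rc1, rs1;
    replace (IZR (-1)) with (-1) by reflexivity; replace (IZR 1) with 1 by reflexivity;
    clear -Hs Hh; unfold Rdiv in *; nsatz. }
  apply (f_equal alpha) in R2.
  rewrite (a_hom _ HA (Mf 0 0 1)) in R2 by (apply inM_Mf; auto using Lp0, Lp_e2).
  rewrite (a_hom _ HA (Mf (IZR (-1) + IZR 1 / 2) (IZR 1 * (sqrt 3 / 2)) 0)) in R2
    by (apply inM_Mf; auto using Lp0; exists (-1)%Z, 1%Z; auto).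
  rewrite Ew, Eq, Hlin, !Mf_comp, rc0, rs0 in R2. apply Mf_inj in R2. destruct R2 as [R2a [R2b _]].
  replace (IZR (-1)) with (-1) in R2a, R2b by reflexivity; replace (IZR 1) with 1 in R2a, R2b by reflexivity.
  destruct (a_surj _ HA (Mf 1 0 0) (inM_Mf _ _ _ Lp_e1)) as [g [Hg Eg]].
  destruct (a_pre_trans _ HA g 1 0 Hg Eg (or_introl R1_neq_R0)) as [u1 [u2 [[m [n [-> ->]]] ->]]].
  rewrite Hlin in Eg. apply Mf_inj in Eg. destruct Eg as [S1 [S2 _]].
  assert (Hq1 : q1 = rc j * p1 - rs j * p2) by lra.
  assert (Hq2 : q2 = rs j * p1 + rc j * p2) by lra.
  assert (Hpn : p1 * p1 + p2 * p2 = 1 /\ ((j mod 6 = 1)%nat \/ (j mod 6 = 5)%nat)).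
  { pose proof (rc_sq j) as Hsq.
    rcase j.
    2: { split; [apply (good_case p1 p2 q1 q2 m n (1/2) (sqrt 3/2)); auto | left; auto]. }
    5: { split; [apply (good_case p1 p2 q1 q2 m n (1/2) (- (sqrt 3/2))); auto | right; auto]. }
    all: exfalso;
      assert (p1 = 0) by (clear -Hq1 Hq2 R2a R2b Hs Hh; unfold Rdiv in *; nsatz);
      assert (p2 = 0) by (clear -Hq1 Hq2 R2a R2b Hs Hh; unfold Rdiv in *; nsatz);
      subst p1 p2; rewrite Hq1 in S1; lra. }
  destruct Hpn as [Hpn Hj].
  destruct (Lp_unit _ _ Hp Hpn) as [j' [Hp1 Hp2]].
  destruct Hj as [Hj|Hj].
  - apply (final_step alpha HA p1 p2 q1 q2 w1 w2 j j' false); auto.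
  - apply (final_step alpha HA p1 p2 q1 q2 w1 w2 j j' true); auto.
Qed.

Theorem lemma2 :
  (* Aff(M) = {idt., c-ref.}, the two being distinct *)
  inNA aff_id /\ inNA refl_x /\ ~ induced_eq aff_id refl_x /\
  (forall f, inNA f -> induced_eq f aff_id \/ induced_eq f refl_x) /\
  (* Sym(M) = Aff(M): every affinity of E^2/M is an isometry *)
  (forall f, inNA f -> induced_isometry f) /\
  (* Omega is a well-defined homomorphism Aff(M) -> Out(M) ... *)
  (forall f g, inNA f -> inNA g -> induced_eq f g -> out_eq (conj_by f) (conj_by g)) /\
  (forall f g, inNA f -> inNA g ->
     out_eq (conj_by (aff_comp f g)) (fun x => conj_by f (conj_by g x))) /\
  (* ... which is injective ... *)
  (forall f g, inNA f -> inNA g -> out_eq (conj_by f) (conj_by g) -> induced_eq f g) /\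
  (* ... and surjective *)
  (forall alpha, is_autM alpha -> exists f, inNA f /\ out_eq alpha (conj_by f)).
Proof.
  split; [exact part_refl_id|].
  split; [exact part_refl|].
  split; [exact part_distinct|].
  split; [exact part_class|].
  split; [exact part_iso|].
  split; [exact part_welldef|].
  split; [exact part_hom|].
  split; [exact part_inj|].
  exact part_surj.
Qed.
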